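(* Let $C\in\mathbb D$ with basis $c_i=\delta_{\lambda_i}\circ(\partial_z+\gamma_i)$, $i=1,\dots,n$. Then the $N=rn$ functions $c_i(\hat f_j)$, $1\le i\le n$, $1\le j\le r$, are linearly independent.
   Context: Fix an integer $r>1$ and constants $a_1,\dots,a_{r-2}\in\mathbb C$, and let $L_0=\partial^r-a_{r-2}\partial^{r-2}-\cdots-a_1\partial-x$, where $\partial=d/dx$. Fix a basis $f_1,\dots,f_r$ of $\ker L_0$. For a function $f$ of one variable write $\hat f(x,z)=f(x+z)$. $\mathcal S$ denotes the space of finitely supported distributions in the $z$-plane: finite linear combinations of $\delta_\lambda\circ\partial_z^j$ ($\lambda\in\mathbb C$, $j\ge0$), where $\delta_\lambda$ evaluates its argument at $z=\lambda$; applied to a function $\psi(x,z)$ such a distribution acts in the $z$ variable and yields a function of $x$. $\mathbb D$ is the set of finite-dimensional subspaces $C\subset\mathcal S$ having a basis $c_i=\delta_{\lambda_i}\circ(\partial_z+\gamma_i)$, $i=1,\dots,n$ ($n\ge1$), with $\lambda_1,\dots,\lambda_n$ pairwise distinct and $\gamma_i\in\mathbb C$. *)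

(* Defs.v *)
From Stdlib Require Import Reals.
From Coquelicot Require Import Coquelicot.

Open Scope C_scope.

Fixpoint csum (n : nat) (u : nat -> C) : C :=
  match n with
  | O => 0
  | S m => csum m u + u m
  end.

Definition cderiv (f g : C -> C) : Prop :=
  forall x : C, @is_derive C_AbsRing C_NormedModule f x (g x).

(* f lies in ker L0, where
   L0 = d^r - a_{r-2} d^{r-2} - ... - a_1 d - x :
   f has successive complex derivatives D 0 = f, D 1, ..., D r and
   D r x = a_1 D 1 x + ... + a_{r-2} D (r-2) x + x * f x  for all x. *)
Definition in_ker_L0 (r : nat) (a : nat -> C) (f : C -> C) : Prop :=
  exists D : nat -> C -> C,
    D O = f /\
    (forall k, (k < r)%nat -> cderiv (D k) (D (S k))) /\
    (forall x : C,
        D r x = csum (r - 2) (fun k => a (S k) * D (S k) x) + x * f x).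

Definition is_basis_ker_L0 (r : nat) (a : nat -> C) (f : nat -> C -> C) : Prop :=
  (forall j, (j < r)%nat -> in_ker_L0 r a (f j)) /\
  (forall c : nat -> C,
      (forall x, csum r (fun j => c j * f j x) = 0) ->
      forall j, (j < r)%nat -> c j = 0) /\
  (forall g, in_ker_L0 r a g ->
      exists c : nat -> C, forall x, g x = csum r (fun j => c j * f j x)).

(* c_i (\hat f)(x) for c_i = delta_lambda o (d_z + gamma), where df is the
   derivative of f: (d/dz f(x+z) + gamma f(x+z)) at z = lambda. *)
Definition apply_c (lambda gamma : C) (f df : C -> C) (x : C) : C :=
  df (x + lambda) + gamma * f (x + lambda).

(* Main.v *)
Require Import Defs.
From Stdlib Require Import Reals Lia IndefiniteDescription.
From Coquelicot Require Import Coquelicot.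
Open Scope C_scope.

Lemma cd_plus f g f' g' : cderiv f f' -> cderiv g g' ->
  cderiv (fun x => f x + g x) (fun x => f' x + g' x).
Proof. intros Hf Hg x. apply (is_derive_plus f g x _ _ (Hf x) (Hg x)). Qed.

Lemma tr (f : C -> C) x l : @is_derive C_AbsRing (AbsRing_NormedModule C_AbsRing) f x l ->
  @is_derive C_AbsRing C_NormedModule f x l.
Proof. intros [[Hp Hs [M [HM Hn]]] Hd]. split; [split|].
 - exact Hp. - exact Hs. - exists M. split. exact HM. exact Hn.
 - exact Hd. Qed.
Lemma tr' (f : C -> C) x l : @is_derive C_AbsRing C_NormedModule f x l -> 
  @is_derive C_AbsRing (AbsRing_NormedModule C_AbsRing) f x l.
Proof. intros [[Hp Hs [M [HM Hn]]] Hd]. split; [split|].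
 - exact Hp. - exact Hs. - exists M. split. exact HM. exact Hn.
 - exact Hd. Qed.

Lemma cd_mult f g f' g' : cderiv f f' -> cderiv g g' ->
  cderiv (fun x => f x * g x) (fun x => f' x * g x + f x * g' x).
Proof. intros Hf Hg x.
  pose proof (@is_derive_mult C_AbsRing f g x (f' x) (g' x)) as H.
  apply tr, H. apply tr', (Hf x). apply tr', (Hg x). intros; apply Cmult_comm. Qed.
Lemma cd_const c : cderiv (fun _ => c) (fun _ => 0).
Proof. intros x. apply (is_derive_const c x). Qed.
Lemma cd_id : cderiv (fun x => x) (fun _ => 1).
Proof. intros x. apply tr. apply (is_derive_id x). Qed.
Lemma cd_ext f g f' g' : (forall x, f x = g x) -> (forall x, f' x = g' x) -> cderiv f f' -> cderiv g g'.
Proof. intros E E' H x. rewrite <- E'. eapply is_derive_ext. apply E. apply H. Qed.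
Lemma cd_scal c f f' : cderiv f f' -> cderiv (fun x => c * f x) (fun x => c * f' x).
Proof. intros H. eapply cd_ext. 3: apply (cd_mult _ _ _ _ (cd_const c) H). reflexivity. intros; simpl; ring. Qed.
Lemma cd_shift l f f' : cderiv f f' -> cderiv (fun x => f (x + l)) (fun x => f' (x + l)).
Proof. intros H x.
  assert (Hg : cderiv (fun x => x + l) (fun _ => 1)).
  { eapply cd_ext. 3: apply (cd_plus _ _ _ _ cd_id (cd_const l)). reflexivity. intros; simpl; ring. }
  pose proof (@is_derive_comp C_AbsRing C_NormedModule f (fun x => x + l) x (f' (x+l)) (1:C) (H _) (tr' _ _ _ (Hg x))) as K.
  eapply is_derive_ext. 2: { replace (f' (x+l)) with (scal (1:C) (f' (x+l))). apply K. 
   change (1 * f' (x+l) = f' (x+l)). ring. } reflexivity. Qed.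
Lemma cd_unique f f' g : cderiv f f' -> cderiv f g -> forall x, f' x = g x.
Proof. intros H1 H2 x. rewrite <- (is_C_derive_unique _ _ _ (H1 x)). apply is_C_derive_unique, H2. Qed.
Lemma cd_zero f f' : cderiv f f' -> (forall x, f x = 0) -> forall x, f' x = 0.
Proof. intros H Z. apply (cd_unique f). auto. eapply cd_ext. 3: apply (cd_const 0). intros; rewrite Z; auto. auto. Qed.

Lemma csum_ext n u v : (forall k, (k < n)%nat -> u k = v k) -> csum n u = csum n v.
Proof. induction n; simpl; intros H; auto. rewrite IHn, H; auto. Qed.
Lemma csum_plus n u v : csum n (fun k => u k + v k) = csum n u + csum n v.
Proof. induction n; simpl. ring. rewrite IHn; ring. Qed.
Lemma csum_mul n c u : c * csum n u = csum n (fun k => c * u k).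
Proof. induction n; simpl. ring. rewrite <- IHn; ring. Qed.
Lemma csum_lin3 n u v w : csum n u - csum n v - csum n w = csum n (fun i => u i - v i - w i).
Proof. induction n; simpl. ring. rewrite <- IHn; ring. Qed.
Lemma csum_swap n m g : csum n (fun i => csum m (fun k => g i k)) = csum m (fun k => csum n (fun i => g i k)).
Proof. induction n; simpl.
 - induction m; simpl; auto. rewrite <- IHm. now rewrite Cplus_0_r.
 - rewrite IHn, <- csum_plus. reflexivity. Qed.
Lemma csum_zero n (u : nat -> C) : (forall k, (k < n)%nat -> u k = 0) -> csum n u = 0.
Proof. induction n; simpl; intros H; auto. rewrite IHn, H; auto. ring. Qed.
Lemma csum_single n (u : nat -> C) i0 : (i0 < n)%nat -> (forall i, (i < n)%nat -> i <> i0 -> u i = 0) -> csum n u = u i0.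
Proof. induction n; simpl; intros Hi H. lia.
 destruct (Nat.eq_dec n i0).
 - subst. rewrite csum_zero. ring. intros k Hk. apply H; lia.
 - rewrite (H n) by lia. rewrite IHn. ring. lia. intros; apply H; auto. Qed.
Lemma cd_csum n u u' : (forall k, (k < n)%nat -> cderiv (u k) (u' k)) ->
  cderiv (fun x => csum n (fun k => u k x)) (fun x => csum n (fun k => u' k x)).
Proof. induction n; simpl; intros H.
 - apply cd_const.
 - apply cd_plus. apply IHn; auto. apply H; auto. Qed.

Definition Good n (E : nat -> nat -> C -> C) (p q : nat -> C) :=
  forall x, csum n (fun i => p i * E i 0%nat x + q i * E i 1%nat x) = 0.

Lemma step r n (a lambda : nat -> C) (E : nat -> nat -> C -> C)
  (HE1 : forall i k, (i < n)%nat -> (k <= r)%nat -> cderiv (E i k) (E i (S k)))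
  (HE2 : forall i x, (i < n)%nat -> E i r x = csum (r-2) (fun k => a (S k) * E i (S k) x) + (x + lambda i) * E i 0%nat x)
  (HE3 : forall i x, (i < n)%nat -> E i (S r) x = csum (r-2) (fun k => a (S k) * E i (S (S k)) x) + E i 0%nat x + (x + lambda i) * E i 1%nat x)
  p q : (1 < r)%nat -> Good n E p q -> Good n E (fun i => lambda i * p i + q i) (fun i => lambda i * q i).
Proof.
  intros Hr HG.
  set (G k x := csum n (fun i => p i * E i k x + q i * E i (S k) x)).
  assert (HGk : forall k, (k <= r)%nat -> forall x, G k x = 0).
  { induction k; intros Hk.
    - apply HG.
    - apply (cd_zero (G k)). 2: apply IHk; lia.
      unfold G. apply (cd_csum n (fun i x => p i * E i k x + q i * E i (S k) x)).
      intros i Hi. apply cd_plus; apply cd_scal; apply HE1; auto; lia. }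
  intros x.
  assert (Z : G r x - csum (r-2) (fun k => a (S k) * G (S k) x) - x * G 0%nat x = 0).
  { rewrite (HGk r) by lia. rewrite (HGk 0%nat) by lia.
    rewrite (csum_zero _ (fun k => a (S k) * G (S k) x)). ring.
    intros k Hk. rewrite HGk. ring. lia. }
  rewrite <- Z. unfold G.
  rewrite (csum_ext (r-2) _ (fun k => csum n (fun i => a (S k) * (p i * E i (S k) x + q i * E i (S (S k)) x)))).
  2: { intros; apply csum_mul. }
  rewrite <- csum_swap.
  rewrite csum_mul, csum_lin3. apply csum_ext. intros i Hi.
  rewrite HE2, HE3 by auto.
  rewrite (csum_ext _ (fun k => a (S k) * (p i * E i (S k) x + q i * E i (S (S k)) x))
     (fun k => p i * (a (S k) * E i (S k) x) + q i * (a (S k) * E i (S (S k)) x))) by (intros; ring).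
  rewrite csum_plus, <- !csum_mul. ring.
Qed.

Lemma Good_ext n E p q p' q' : (forall i, p i = p' i) -> (forall i, q i = q' i) -> Good n E p q -> Good n E p' q'.
Proof. intros H1 H2 H x. rewrite <- (H x). apply csum_ext. intros; rewrite H1, H2; auto. Qed.

Lemma csum_minus n (u v : nat -> C) : csum n u - csum n v = csum n (fun i => u i - v i).
Proof. induction n; simpl. ring. rewrite <- IHn; ring. Qed.

Lemma Good_lin n E p q p' q' c : Good n E p q -> Good n E p' q' ->
  Good n E (fun i => p i - c * p' i) (fun i => q i - c * q' i).
Proof. intros H H' x.
  replace (RtoC 0) with (csum n (fun i => p i * E i 0%nat x + q i * E i 1%nat x) - c * csum n (fun i => p' i * E i 0%nat x + q' i * E i 1%nat x)).
  2: { rewrite H, H'. ring. }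
  rewrite csum_mul, csum_minus. apply csum_ext. intros; ring. Qed.

Section LA.
Variable n : nat.
Variable P : (nat -> C) -> (nat -> C) -> Prop.
Variable lambda : nat -> C.
Hypothesis HP : forall c p q, P p q -> P (fun i => (lambda i - c) * p i + q i) (fun i => (lambda i - c) * q i).
Hypothesis Hd : forall i i', (i < n)%nat -> (i' < n)%nat -> lambda i = lambda i' -> i = i'.
Variable i0 : nat.
Hypothesis Hi0 : (i0 < n)%nat.

Definition Sc (c : C) (w : (nat -> C) * (nat -> C)) : (nat -> C) * (nat -> C) :=
  (fun i => (lambda i - c) * fst w i + snd w i, fun i => (lambda i - c) * snd w i).

Fixpoint W (w0 : (nat -> C) * (nat -> C)) (m : nat) :=
  match m with
  | O => w0
  | S m => if Nat.eq_dec m i0 then W w0 m else Sc (lambda m) (Sc (lambda m) (W w0 m))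
  end.

Lemma W_prop p0 q0 : P p0 q0 -> q0 i0 <> 0 -> forall m, (m <= n)%nat ->
  P (fst (W (p0, q0) m)) (snd (W (p0,q0) m)) /\ snd (W (p0,q0) m) i0 <> 0 /\
  (forall i, (i < m)%nat -> i <> i0 -> fst (W (p0,q0) m) i = 0 /\ snd (W (p0,q0) m) i = 0).
Proof.
  intros H0 Hq. induction m; intros Hm.
  - simpl. split; auto. split; auto. intros; lia.
  - destruct IHm as [IH1 [IH2 IH3]]; [lia|]. simpl.
    destruct (Nat.eq_dec m i0).
    + split; auto. split; auto. intros i Hi Hne. apply IH3; lia.
    + destruct (W (p0,q0) m) as [p q]. simpl in *.
      split. { apply HP, HP, IH1. }
      split. { assert (Hl : lambda i0 - lambda m <> 0).
           { apply Cminus_eq_contra. intros E. apply n0. symmetry. apply Hd; auto; lia. }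
           apply Cmult_neq_0; auto. apply Cmult_neq_0; auto. }
      intros i Hi Hne. destruct (Nat.eq_dec i m).
      * subst. replace (lambda m - lambda m) with (RtoC 0) by ring. split; ring.
      * destruct (IH3 i) as [A B]; [lia|auto|]. rewrite A, B. split; ring.
Qed.

Lemma linalg p0 q0 : P p0 q0 -> q0 i0 <> 0 -> exists p q, P p q /\
  (forall i, (i < n)%nat -> i <> i0 -> p i = 0 /\ q i = 0) /\ q i0 = 0 /\ p i0 <> 0.
Proof.
  intros H0 Hq. destruct (W_prop p0 q0 H0 Hq n (le_n n)) as [A [B D]].
  destruct (W (p0,q0) n) as [p q]. simpl in *.
  exists (fun i => (lambda i - lambda i0) * p i + q i), (fun i => (lambda i - lambda i0) * q i).
  split. apply HP, A.
  split. { intros i Hi Hne. destruct (D i Hi Hne) as [E F]. rewrite E, F. split; ring. }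
  replace (lambda i0 - lambda i0) with (RtoC 0) by ring. split. ring.
  replace (0 * p i0 + q i0) with (q i0) by ring. auto.
Qed.
End LA.

Theorem mainTheorem4
  (r : nat) (a : nat -> C) (f df : nat -> C -> C)
  (n : nat) (lambda gamma : nat -> C) :
  (1 < r)%nat ->
  is_basis_ker_L0 r a f ->
  (forall j, (j < r)%nat -> cderiv (f j) (df j)) ->
  (1 <= n)%nat ->
  (forall i i', (i < n)%nat -> (i' < n)%nat -> lambda i = lambda i' -> i = i') ->
  forall mu : nat -> nat -> C,
    (forall x : C,
        csum n (fun i => csum r (fun j =>
          mu i j * apply_c (lambda i) (gamma i) (f j) (df j) x)) = 0) ->
    forall i j, (i < n)%nat -> (j < r)%nat -> mu i j = 0.
Proof.
  intros Hr [Hker [Hind _]] Hdf Hn Hd mu Hsum.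
  assert (HD : forall j, {D : nat -> C -> C | (j < r)%nat -> D 0%nat = f j /\
     (forall k, (k < r)%nat -> cderiv (D k) (D (S k))) /\
     (forall x, D r x = csum (r-2) (fun k => a (S k) * D (S k) x) + x * f j x)}).
  { intros j. apply constructive_indefinite_description.
    destruct (Compare_dec.lt_dec j r) as [l|l].
    - destruct (Hker j l) as [D [H0 [H1 H2]]]. exists D. intros _. subst. auto.
    - exists (fun _ _ => RtoC 0). intros; lia. }
  set (DD j := proj1_sig (HD j)).
  assert (DD0 : forall j, (j < r)%nat -> DD j 0%nat = f j).
  { intros j Hj. apply (proj2_sig (HD j) Hj). }
  assert (DDd : forall j k, (j < r)%nat -> (k < r)%nat -> cderiv (DD j k) (DD j (S k))).
  { intros j k Hj. apply (proj2_sig (HD j) Hj). }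
  assert (DDr : forall j x, (j < r)%nat -> DD j r x = csum (r-2) (fun k => a (S k) * DD j (S k) x) + x * f j x).
  { intros j x Hj. apply (proj2_sig (HD j) Hj). }
  clearbody DD.
  assert (Hf1 : forall j, (j < r)%nat -> cderiv (f j) (DD j 1%nat)).
  { intros j Hj. rewrite <- (DD0 j Hj). apply DDd; auto; lia. }
  set (D1 j x := csum (r-2) (fun k => a (S k) * DD j (S (S k)) x) + f j x + x * DD j 1%nat x).
  set (DE j k := if Nat.eq_dec k (S r) then D1 j else DD j k).
  assert (DEe : forall j k, (k <= r)%nat -> DE j k = DD j k).
  { intros j k Hk. unfold DE. destruct (Nat.eq_dec k (S r)); auto; lia. }
  assert (DEr : forall j, DE j (S r) = D1 j).
  { intros j. unfold DE. destruct (Nat.eq_dec (S r) (S r)); auto; lia. }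
  clearbody DE.
  assert (DEd : forall j k, (j < r)%nat -> (k <= r)%nat -> cderiv (DE j k) (DE j (S k))).
  { intros j k Hj Hk. destruct (Nat.eq_dec k r) as [->|Hne].
    - rewrite DEr, DEe by lia.
      eapply cd_ext. intros x; symmetry; apply DDr; auto. reflexivity.
      unfold D1.
      eapply cd_ext. reflexivity. 2: apply cd_plus.
      3: apply (cd_mult (fun x => x) (f j) (fun _ => 1) (DD j 1%nat) cd_id (Hf1 j Hj)).
      2: apply (cd_csum (r-2) (fun k x => a (S k) * DD j (S k) x)); intros k Hk'; apply cd_scal, DDd; auto; lia.
      intros x. simpl. ring.
    - rewrite !DEe by lia. apply DDd; auto; lia. }
  set (E i k x := csum r (fun j => mu i j * DE j k (x + lambda i))).
  assert (HE1 : forall i k, (i < n)%nat -> (k <= r)%nat -> cderiv (E i k) (E i (S k))).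
  { intros i k Hi Hk. unfold E.
    apply (cd_csum r (fun j x => mu i j * DE j k (x + lambda i))).
    intros j Hj. apply cd_scal. apply (cd_shift (lambda i) (DE j k)). apply DEd; auto. }
  assert (HE2 : forall i x, (i < n)%nat -> E i r x = csum (r-2) (fun k => a (S k) * E i (S k) x) + (x + lambda i) * E i 0%nat x).
  { intros i x Hi. unfold E.
    rewrite (csum_ext (r-2) _ (fun k => csum r (fun j => a (S k) * (mu i j * DE j (S k) (x + lambda i))))) by (intros; apply csum_mul).
    rewrite <- csum_swap, csum_mul, <- csum_plus. apply csum_ext. intros j Hj.
    rewrite DEe, DDr, DEe by lia. rewrite DD0 by auto.
    rewrite Cmult_plus_distr_l, csum_mul.
    f_equal. 2: ring. apply csum_ext. intros k Hk. rewrite DEe by lia. ring. }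
  assert (HE3 : forall i x, (i < n)%nat -> E i (S r) x = csum (r-2) (fun k => a (S k) * E i (S (S k)) x) + E i 0%nat x + (x + lambda i) * E i 1%nat x).
  { intros i x Hi. unfold E.
    rewrite (csum_ext (r-2) _ (fun k => csum r (fun j => a (S k) * (mu i j * DE j (S (S k)) (x + lambda i))))) by (intros; apply csum_mul).
    rewrite <- csum_swap, csum_mul, <- !csum_plus. apply csum_ext. intros j Hj.
    rewrite DEr, !DEe by lia. rewrite DD0 by auto. unfold D1.
    rewrite !Cmult_plus_distr_l, csum_mul.
    f_equal; [f_equal; apply csum_ext; intros k Hk; rewrite DEe by lia; ring | ring]. }

  assert (Hclos : forall c p q, Good n E p q -> Good n E (fun i => (lambda i - c) * p i + q i) (fun i => (lambda i - c) * q i)).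
  { intros c p q H.
    pose proof (step r n a lambda E HE1 HE2 HE3 p q Hr H) as H1.
    pose proof (Good_lin n E _ _ _ _ c H1 H) as H2.
    eapply Good_ext. 3: apply H2. intros; simpl; ring. intros; simpl; ring. }
  assert (H0 : Good n E gamma (fun _ => RtoC 1)).
  { intros x. rewrite <- (Hsum x). apply csum_ext. intros i Hi.
    unfold E. rewrite !csum_mul, <- csum_plus. apply csum_ext. intros j Hj.
    rewrite !DEe by lia. rewrite DD0 by auto. unfold apply_c.
    rewrite (cd_unique _ _ _ (Hf1 j Hj) (Hdf j Hj)). ring. }
  intros i0 j0 Hi0 Hj0.
  destruct (linalg n (Good n E) lambda Hclos Hd i0 Hi0 gamma (fun _ => RtoC 1) H0 C1_nz) as [p [q [G1 [G2 [G3 G4]]]]].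
  assert (HEz : forall x, E i0 0%nat x = 0).
  { intros x. pose proof (G1 x) as Gx.
    rewrite (csum_single n _ i0 Hi0) in Gx.
    2: { intros i Hi Hne. destruct (G2 i Hi Hne) as [-> ->]. ring. }
    rewrite G3 in Gx.
    replace (p i0 * E i0 0%nat x + 0 * E i0 1%nat x) with (p i0 * E i0 0%nat x) in Gx by ring.
    destruct (Classical_Prop.classic (E i0 0%nat x = 0)) as [Hz|Hz]; auto.
    exfalso. exact (Cmult_neq_0 _ _ G4 Hz Gx). }
  apply (Hind (mu i0)); auto.
  intros y. rewrite <- (HEz (y - lambda i0)). unfold E. apply csum_ext. intros j Hj.
  rewrite DEe by lia. rewrite DD0 by auto. f_equal. f_equal. ring.
Qed.
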